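(* Let $\langle B,\wedge,{}'\rangle$ be an algebra with $\wedge$ binary and ${}'$ unary satisfying $x\wedge(y\wedge z)\approx y\wedge(z\wedge x)$ and $x\approx (x'\wedge y)'\wedge(x'\wedge y')'$. Then $x\wedge y=y\wedge x$ for all $x,y\in B$. *)


Theorem lemma4p20 (B : Type) (meet : B -> B -> B) (c : B -> B)
  (hcyc : forall x y z : B, meet x (meet y z) = meet y (meet z x))
  (hax : forall x y : B, x = meet (c (meet (c x) y)) (c (meet (c x) (c y)))) :
  forall x y : B, meet x y = meet y x.
Proof.
  assert (L1 : forall x0 x1 : B, (meet (c (meet (c x0) x1)) (c (meet (c x0) (c x1)))) = x0).
  { intros x0 x1. pose proof (hax x0 x1) as H0. congruence. }
  assert (L4 : forall x0 x1 x2 : B, (meet (c (meet x0 (meet x1 (c x2)))) (c (meet (c x2) (c (meet x0 x1))))) = x2).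
  { intros x0 x1 x2. pose proof (hcyc (c x2) x0 x1) as H0. pose proof (L1 x2 (meet x0 x1)) as H1. congruence. }
  assert (L8 : forall x0 x1 x2 : B, (meet (meet x0 (c (meet (c x1) x2))) x1) = (meet x1 (meet (c (meet (c x1) x2)) x0))).
  { intros x0 x1 x2. pose proof (hcyc x0 x1 (c (meet (c x1) x2))) as H0. pose proof (hcyc x0 (c (meet (c x1) x2)) (c (meet (c x1) (c x2)))) as H1. pose proof (hcyc (meet x0 (c (meet (c x1) x2))) (c (meet (c x1) x2)) (c (meet (c x1) (c x2)))) as H2. pose proof (hcyc (c (meet (c x1) x2)) x0 x1) as H3. pose proof (hcyc (c (meet (c x1) x2)) (c (meet (c x1) (c x2))) x0) as H4. pose proof (L1 x1 x2) as H5. congruence. }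
  assert (L9 : forall x0 x1 x2 : B, (meet (meet (c (meet (c x0) (c (c x1)))) x2) x0) = (meet x0 (meet (c (meet (c x0) x1)) x2))).
  { intros x0 x1 x2. pose proof (hcyc x2 x0 (c (meet (c x0) x1))) as H0. pose proof (hcyc x2 (c (meet (c x0) (c x1))) (c (meet (c x0) (c (c x1))))) as H1. pose proof (hcyc (meet (c (meet (c x0) (c (c x1)))) x2) (c (meet (c x0) x1)) (c (meet (c x0) (c x1)))) as H2. pose proof (hcyc (c (meet (c x0) x1)) x2 x0) as H3. pose proof (L1 x0 x1) as H4. pose proof (L1 x0 (c x1)) as H5. congruence. }
  assert (L13 : forall x0 x1 x2 x3 : B, (meet x0 (meet (meet x1 (c (meet (c x2) (c x3)))) (c (meet (c x2) x3)))) = (meet (meet x0 x1) x2)).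
  { intros x0 x1 x2 x3. pose proof (hcyc (meet x0 x1) (c (meet (c x2) x3)) (c (meet (c x2) (c x3)))) as H0. pose proof (hcyc (c (meet (c x2) x3)) x0 (meet x1 (c (meet (c x2) (c x3))))) as H1. pose proof (hcyc (c (meet (c x2) (c x3))) x0 x1) as H2. pose proof (L1 x2 x3) as H3. congruence. }
  assert (L16 : forall x0 x1 x2 : B, (meet (meet (c (meet (c x0) (c x1))) x2) x0) = (meet x2 (meet x0 (c (meet (c x0) (c x1)))))).
  { intros x0 x1 x2. pose proof (hcyc x0 (c (meet (c x0) (c x1))) x2) as H0. pose proof (hcyc x2 (meet (c (meet (c x0) (c x1))) (c (meet (c x0) (c x1)))) (c (meet (c x0) x1))) as H1. pose proof (hcyc (meet x2 (c (meet (c x0) (c x1)))) (c (meet (c x0) x1)) (c (meet (c x0) (c x1)))) as H2. pose proof (hcyc (meet (c (meet (c x0) (c x1))) (c (meet (c x0) (c x1)))) (c (meet (c x0) x1)) x2) as H3. pose proof (hcyc (c (meet (c x0) (c x1))) x2 x0) as H4. pose proof (hcyc (c (meet (c x0) (c x1))) x2 (c (meet (c x0) (c x1)))) as H5. pose proof (hcyc (c (meet (c x0) (c x1))) (meet x2 (c (meet (c x0) (c x1)))) (c (meet (c x0) x1))) as H6. pose proof (L8 x2 x0 (c x1)) as H7. pose proof (L13 x2 (c (meet (c x0) (c x1))) x0 x1) as H8. pose proof (L13 (c (meet (c x0) (c x1))) x2 x0 x1) as H9. congruence. }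
  assert (L18 : forall x0 x1 x2 : B, (meet x0 (meet (c (meet (c x0) (c (c x1)))) x2)) = (meet x0 (meet (c (meet (c x0) x1)) x2))).
  { intros x0 x1 x2. pose proof (hcyc x2 x0 (c (meet (c x0) (c (c x1))))) as H0. pose proof (L9 x0 x1 x2) as H1. pose proof (L16 x0 (c x1) x2) as H2. congruence. }
  assert (L29 : forall x0 x1 x2 x3 : B, (meet x0 (meet (meet (c (meet (c x1) (c x2))) x3) (c (meet (c x1) x2)))) = (meet (meet x3 x0) x1)).
  { intros x0 x1 x2 x3. pose proof (hcyc x3 x0 (c (meet (c x1) (c x2)))) as H0. pose proof (hcyc x3 (meet x0 (c (meet (c x1) (c x2)))) (c (meet (c x1) x2))) as H1. pose proof (hcyc (meet x0 (c (meet (c x1) (c x2)))) (c (meet (c x1) x2)) x3) as H2. pose proof (hcyc (c (meet (c x1) x2)) x0 (meet (c (meet (c x1) (c x2))) x3)) as H3. pose proof (L13 x3 x0 x1 x2) as H4. congruence. }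
  assert (L33 : forall x0 x1 x2 x3 x4 : B, (meet x0 (meet (meet x1 (c (meet (c x2) (c (meet x3 x4))))) (c (meet x3 (meet x4 (c x2)))))) = (meet (meet x0 x1) x2)).
  { intros x0 x1 x2 x3 x4. pose proof (hcyc (meet x0 x1) (c (meet x3 (meet x4 (c x2)))) (c (meet (c x2) (c (meet x3 x4))))) as H0. pose proof (hcyc (c (meet x3 (meet x4 (c x2)))) x0 (meet x1 (c (meet (c x2) (c (meet x3 x4)))))) as H1. pose proof (hcyc (c (meet (c x2) (c (meet x3 x4)))) x0 x1) as H2. pose proof (L4 x3 x4 x2) as H3. congruence. }
  assert (L50 : forall x0 x1 x2 x3 : B, (meet x0 (meet (meet (c (meet (c x0) x1)) x2) x3)) = (meet x0 (meet x3 (meet x2 (c (meet (c x0) x1)))))).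
  { intros x0 x1 x2 x3. pose proof (hcyc x0 x3 (meet x2 (c (meet (c x0) x1)))) as H0. pose proof (hcyc x3 x0 (meet (c (meet (c x0) x1)) x2)) as H1. pose proof (L8 x2 x0 x1) as H2. congruence. }
  assert (L55 : forall x0 x1 x2 x3 : B, (meet x0 (meet (meet (c (meet (c x1) x2)) x3) x1)) = (meet x0 (meet (meet x1 (c (meet (c x1) x2))) x3))).
  { intros x0 x1 x2 x3. pose proof (hcyc x1 x0 (meet (c (meet (c x1) x2)) x3)) as H0. pose proof (hcyc x1 (c (meet (c x1) x2)) x0) as H1. pose proof (hcyc x3 x0 (meet x1 (c (meet (c x1) x2)))) as H2. pose proof (hcyc x3 x0 (c (meet (c x1) x2))) as H3. pose proof (hcyc x3 (meet x0 (c (meet (c x1) x2))) x1) as H4. pose proof (hcyc (meet x0 (c (meet (c x1) x2))) x1 x3) as H5. pose proof (hcyc (c (meet (c x1) x2)) x0 x1) as H6. pose proof (L8 x0 x1 x2) as H7. congruence. }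
  assert (L61 : forall x0 x1 x2 x3 : B, (meet x0 (meet (meet (c (meet (c x0) x1)) x2) x3)) = (meet x0 (meet x2 (meet (c (meet (c x0) x1)) x3)))).
  { intros x0 x1 x2 x3. pose proof (hcyc x0 x2 (meet (c (meet (c x0) x1)) x3)) as H0. pose proof (hcyc x2 (meet (c (meet (c x0) x1)) x3) x0) as H1. pose proof (hcyc x3 x0 (meet (c (meet (c x0) x1)) x2)) as H2. pose proof (hcyc x3 x2 (c (meet (c x0) x1))) as H3. pose proof (hcyc x3 (meet x2 (c (meet (c x0) x1))) x0) as H4. pose proof (hcyc (meet x2 (c (meet (c x0) x1))) x0 x3) as H5. pose proof (hcyc (meet (c (meet (c x0) x1)) x3) x0 x2) as H6. pose proof (L8 x2 x0 x1) as H7. congruence. }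
  assert (L73 : forall x0 x1 x2 x3 : B, (meet x0 (meet x1 (meet (c (meet (c x0) x2)) x3))) = (meet x0 (meet x1 (meet x3 (c (meet (c x0) x2)))))).
  { intros x0 x1 x2 x3. pose proof (hcyc x1 x0 (meet (c (meet (c x0) x2)) x3)) as H0. pose proof (hcyc x1 x3 (c (meet (c x0) (c (c x2))))) as H1. pose proof (hcyc x1 (meet x3 (c (meet (c x0) (c (c x2))))) x0) as H2. pose proof (hcyc x3 x0 (meet (c (meet (c x0) x2)) x1)) as H3. pose proof (hcyc x3 (meet (c (meet (c x0) (c (c x2)))) x1) x0) as H4. pose proof (hcyc x3 (c (meet (c x0) x2)) x1) as H5. pose proof (hcyc (meet x3 (c (meet (c x0) (c (c x2))))) x0 x1) as H6. pose proof (hcyc (meet (c (meet (c x0) (c (c x2)))) x1) x0 x3) as H7. pose proof (hcyc (c (meet (c x0) x2)) x1 x3) as H8. pose proof (L8 x3 x0 (c (c x2))) as H9. pose proof (L9 x0 x2 x1) as H10. pose proof (L18 x0 x2 x3) as H11. pose proof (L61 x0 x2 x1 x3) as H12. pose proof (L61 x0 x2 x3 x1) as H13. congruence. }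
  assert (L104 : forall x0 x1 x2 x3 x4 : B, (meet x0 (meet (meet x1 (meet x2 x3)) x4)) = (meet x0 (meet x1 (meet (meet x3 x4) x2)))).
  { intros x0 x1 x2 x3 x4. pose proof (hcyc x2 x1 (meet x3 x4)) as H0. pose proof (hcyc x2 x3 x4) as H1. pose proof (hcyc x3 x4 x1) as H2. pose proof (hcyc x3 x4 x2) as H3. pose proof (hcyc x3 x4 (meet (meet x1 (c (meet (c x2) (c x3)))) (c (meet (c x2) x3)))) as H4. pose proof (hcyc x3 (meet x4 x1) x2) as H5. pose proof (hcyc x4 x0 (meet x1 (meet x2 x3))) as H6. pose proof (hcyc x4 x1 x3) as H7. pose proof (hcyc x4 (meet (meet x1 (c (meet (c x2) (c x3)))) (c (meet (c x2) x3))) x3) as H8. pose proof (hcyc (meet x0 x1) x4 (meet x2 x3)) as H9. pose proof (hcyc (meet x2 x3) x0 x1) as H10. pose proof (hcyc (meet x3 x4) x0 (meet (meet x1 (c (meet (c x2) (c x3)))) (c (meet (c x2) x3)))) as H11. pose proof (hcyc (meet x3 x4) (meet x0 x1) x2) as H12. pose proof (hcyc (meet x4 x1) x2 x3) as H13. pose proof (L13 x0 x1 x2 x3) as H14. pose proof (L13 x4 x1 x2 x3) as H15. congruence. }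
  assert (L137 : forall x0 x1 x2 x3 : B, (meet (meet (meet x0 x1) x2) x3) = (meet x2 (meet (meet x1 x3) x0))).
  { intros x0 x1 x2 x3. pose proof (hcyc x0 x2 (meet (c (meet (c x3) (c x3))) (meet x1 (c (meet (c x3) x3))))) as H0. pose proof (hcyc x1 (c (meet (c x3) x3)) x0) as H1. pose proof (hcyc (meet x0 x1) (meet x2 (c (meet (c x3) (c x3)))) (c (meet (c x3) x3))) as H2. pose proof (hcyc (meet x1 (c (meet (c x3) x3))) x2 (c (meet (c x3) (c x3)))) as H3. pose proof (hcyc (meet x2 (c (meet (c x3) (c x3)))) x0 (meet x1 (c (meet (c x3) x3)))) as H4. pose proof (hcyc (c (meet (c x3) x3)) x0 x1) as H5. pose proof (hcyc (c (meet (c x3) (c x3))) x1 (c (meet (c x3) x3))) as H6. pose proof (L1 x3 x3) as H7. pose proof (L13 (meet x0 x1) x2 x3 x3) as H8. congruence. }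
  assert (L138 : forall x0 x1 x2 x3 : B, (meet x0 (meet (meet x1 x2) x3)) = (meet x0 (meet x1 (meet x3 x2)))).
  { intros x0 x1 x2 x3. pose proof (hcyc x0 (c (meet (c x3) x0)) (meet x1 (meet x2 (c (meet (c x3) (c x0)))))) as H0. pose proof (hcyc x1 (meet x2 (c (meet (c x3) (c x0)))) (c (meet (c x3) x0))) as H1. pose proof (hcyc x1 (meet (c (meet (c x3) (c x0))) x0) x2) as H2. pose proof (hcyc x2 x1 (meet (c (meet (c x3) x0)) (c (meet (c x3) (c x0))))) as H3. pose proof (hcyc (meet x2 x1) x0 (meet (c (meet (c x3) x0)) (c (meet (c x3) (c x0))))) as H4. pose proof (hcyc (meet x2 (c (meet (c x3) (c x0)))) (c (meet (c x3) x0)) x1) as H5. pose proof (hcyc (meet (c (meet (c x3) x0)) (c (meet (c x3) (c x0)))) x2 x1) as H6. pose proof (hcyc (meet (c (meet (c x3) (c x0))) x0) (meet x2 x1) (c (meet (c x3) x0))) as H7. pose proof (hcyc (c (meet (c x3) x0)) (meet (c (meet (c x3) (c x0))) x0) (meet x2 x1)) as H8. pose proof (hcyc (c (meet (c x3) x0)) (c (meet (c x3) (c x0))) x0) as H9. pose proof (hcyc (c (meet (c x3) (c x0))) x0 (c (meet (c x3) x0))) as H10. pose proof (L1 x3 x0) as H11. pose proof (L13 x1 x2 x3 x0) as H12. pose proof (L104 (c (meet (c x3) x0)) x1 x2 (c (meet (c x3) (c x0))) x0) as H13. congruence. }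
  assert (L140 : forall x0 x1 x2 x3 : B, (meet x0 (meet x1 (meet x2 x3))) = (meet x0 (meet x1 (meet x3 x2)))).
  { intros x0 x1 x2 x3. pose proof (hcyc x2 x1 x3) as H0. pose proof (hcyc x2 x3 x1) as H1. pose proof (hcyc x2 (c (meet (c x1) x3)) (c (meet (c x1) (c x3)))) as H2. pose proof (hcyc x3 x1 x2) as H3. pose proof (hcyc x3 x2 x1) as H4. pose proof (hcyc (meet x0 (c (meet (c x1) (c x3)))) (c (meet (c x1) x3)) (meet x3 x2)) as H5. pose proof (hcyc (meet x3 x2) x0 (c (meet (c x1) (c x3)))) as H6. pose proof (hcyc (meet x3 x2) (meet x0 (c (meet (c x1) (c x3)))) (c (meet (c x1) x3))) as H7. pose proof (hcyc (c (meet (c x1) x3)) x0 (meet x3 (meet x2 (c (meet (c x1) (c x3)))))) as H8. pose proof (hcyc (c (meet (c x1) x3)) (c (meet (c x1) (c x3))) x2) as H9. pose proof (hcyc (c (meet (c x1) (c x3))) x3 x2) as H10. pose proof (L1 x1 x3) as H11. pose proof (L13 (meet x3 x2) x0 x1 x3) as H12. pose proof (L104 x0 x3 x2 (c (meet (c x1) (c x3))) (c (meet (c x1) x3))) as H13. pose proof (L137 x3 x2 x0 x1) as H14. pose proof (L138 x0 x2 x1 x3) as H15. pose proof (L138 x3 (c (meet (c x1) (c x3))) (c (meet (c x1) x3)) x2) as H16. congruence. }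
  assert (L209 : forall x0 x1 x2 : B, (meet (meet x0 x1) x2) = (meet (meet x1 x0) x2)).
  { intros x0 x1 x2. pose proof (hcyc x0 x0 (c x2)) as H0. pose proof (hcyc x0 (c x2) x0) as H1. pose proof (hcyc x1 (meet (c (meet (c x2) (c (meet x0 x0)))) x0) (c (meet x0 (meet (c x2) x0)))) as H2. pose proof (hcyc x1 (meet (c (meet (c x2) (c (meet x0 x0)))) x0) (c (meet (c x2) (meet x0 x0)))) as H3. pose proof (hcyc (c (meet x0 (meet (c x2) x0))) x1 (meet x0 (c (meet (c x2) (c (meet x0 x0)))))) as H4. pose proof (hcyc (c (meet x0 (meet (c x2) x0))) x1 (meet (c (meet (c x2) (c (meet x0 x0)))) x0)) as H5. pose proof (L29 x1 x2 (meet x0 x0) x0) as H6. pose proof (L33 x1 x0 x2 x0 x0) as H7. pose proof (L140 (c (meet x0 (meet (c x2) x0))) x1 (c (meet (c x2) (c (meet x0 x0)))) x0) as H8. congruence. }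
  assert (L211 : forall x0 x1 x2 : B, (meet (meet (c (meet (c x0) x1)) x2) x0) = (meet x2 (meet x0 (c (meet (c x0) x1))))).
  { intros x0 x1 x2. pose proof (hcyc x0 (c (meet (c x0) x1)) x2) as H0. pose proof (hcyc (c (meet (c x0) x1)) x2 x0) as H1. pose proof (L8 x2 x0 x1) as H2. pose proof (L209 x2 (c (meet (c x0) x1)) x0) as H3. congruence. }
  assert (L253 : forall x0 x1 x2 : B, (meet (meet x0 x1) x2) = (meet (meet x2 x1) x0)).
  { intros x0 x1 x2. pose proof (L1 x0 x0) as H0. pose proof (L29 x1 x0 x0 x2) as H1. pose proof (L137 (c (meet (c x0) x0)) (c (meet (c x0) (c x0))) x1 x2) as H2. congruence. }
  assert (L269 : forall x0 x1 x2 : B, (meet (meet x0 (c (meet (c x1) (c x2)))) (c (meet (c x1) x2))) = (meet x1 x0)).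
  { intros x0 x1 x2. pose proof (L1 x1 x2) as H0. pose proof (L253 (c (meet (c x1) x2)) (c (meet (c x1) (c x2))) x0) as H1. congruence. }
  assert (L275 : forall x0 x1 x2 : B, (meet (meet (c (meet (c x0) x1)) x2) (c (meet (c x0) (c x1)))) = (meet x0 x2)).
  { intros x0 x1 x2. pose proof (L209 x2 (c (meet (c x0) (c x1))) (c (meet (c x0) x1))) as H0. pose proof (L253 (c (meet (c x0) (c x1))) x2 (c (meet (c x0) x1))) as H1. pose proof (L269 x2 x0 x1) as H2. congruence. }
  assert (L277 : forall x0 x1 x2 : B, (meet (meet x0 (c (meet (c x1) x2))) (c (meet (c x1) (c x2)))) = (meet x1 x0)).
  { intros x0 x1 x2. pose proof (L209 (c (meet (c x1) x2)) x0 (c (meet (c x1) (c x2)))) as H0. pose proof (L275 x1 x2 x0) as H1. congruence. }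
  assert (L283 : forall x0 x1 x2 : B, (meet x0 (meet x1 x2)) = (meet x0 (meet x2 x1))).
  { intros x0 x1 x2. pose proof (L4 (c x0) x0 x1) as H0. pose proof (L50 x0 (meet x0 (c x1)) (c (meet (c x1) (c (meet (c x0) x0)))) x2) as H1. pose proof (L73 x0 x2 (meet x0 (c x1)) (c (meet (c x1) (c (meet (c x0) x0))))) as H2. congruence. }
  assert (L302 : forall x0 x1 x2 : B, (meet (meet x0 x1) x2) = (meet x1 (meet x2 x0))).
  { intros x0 x1 x2. pose proof (hcyc x0 x1 x2) as H0. pose proof (hcyc x0 (meet x1 (c (meet (c x2) (c (meet (c x1) x0))))) (c (meet (c x1) (meet x0 (c x2))))) as H1. pose proof (hcyc x1 (c (meet (c x1) (meet x0 (c x2)))) (c (meet (c x2) (c (meet (c x1) x0))))) as H2. pose proof (hcyc (meet x0 x1) (c (meet (c x2) (c (meet (c x1) x0)))) (c (meet (c x1) (meet x0 (c x2))))) as H3. pose proof (hcyc (meet x1 (c (meet (c x1) (meet x0 (c x2))))) x0 (c (meet (c x2) (c (meet (c x1) x0))))) as H4. pose proof (hcyc (meet x1 (c (meet (c x2) (c (meet (c x1) x0))))) (c (meet (c x1) (meet x0 (c x2)))) x0) as H5. pose proof (hcyc (c (meet (c x1) (meet x0 (c x2)))) x0 x1) as H6. pose proof (hcyc (c (meet (c x1) (meet x0 (c x2)))) (meet x0 x1) (c (meet (c x2) (c (meet (c x1) x0))))) as H7. pose proof (hcyc (c (meet (c x1) (meet x0 (c x2)))) (c (meet (c x2) (c (meet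 (c x1) x0)))) x1) as H8. pose proof (hcyc (c (meet (c x2) (c (meet (c x1) x0)))) (meet x1 (c (meet (c x1) (meet x0 (c x2))))) x0) as H9. pose proof (L4 (c x1) x0 x2) as H10. pose proof (L33 x0 x1 x2 (c x1) x0) as H11. pose proof (L55 (c (meet (c x2) (c (meet (c x1) x0)))) x1 (meet x0 (c x2)) x0) as H12. pose proof (L138 (c (meet (c x1) (meet x0 (c x2)))) x0 x1 (c (meet (c x2) (c (meet (c x1) x0))))) as H13. pose proof (L211 x1 (meet x0 (c x2)) x0) as H14. pose proof (L283 x0 (c (meet (c x2) (c (meet (c x1) x0)))) x1) as H15. congruence. }
  assert (L309 : forall x0 x1 : B, (meet x0 x1) = (meet x1 x0)).
  { intros x0 x1. pose proof (hcyc x1 (c (meet (c x0) x0)) (c (meet (c x0) (c x0)))) as H0. pose proof (L1 x0 x0) as H1. pose proof (L277 x1 x0 x0) as H2. pose proof (L302 x1 (c (meet (c x0) x0)) (c (meet (c x0) (c x0)))) as H3. congruence. }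
  intros x y. pose proof (L309 x y) as H0. congruence.

Qed.
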